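(* Let $\mathbf{k}$ be a field, $Q$ a finite connected quiver, $\Lambda=\mathbf{k}Q/\mathcal{J}^2$ ($\mathcal{J}$ the arrow ideal), $n\ge2$, and assume $\mathcal{C}\subseteq\operatorname{mod}\Lambda$ is an $n$-cluster tilting subcategory. Then for every arrow $v\to u$ in $Q$ we have $\delta^+(v)+\delta^-(u)\le3$.
   Context: Modules are finite-dimensional right modules. $\mathcal{C}$ is $n$-cluster tilting if it is functorially finite and $\mathcal{C}=\{X\mid \operatorname{Ext}^i(X,\mathcal{C})=0\ \forall 0<i<n\}=\{X\mid\operatorname{Ext}^i(\mathcal{C},X)=0\ \forall 0<i<n\}$. $\delta^-(v)$, $\delta^+(v)$ are the numbers of arrows ending, resp. starting, at $v$. *)

(* Defs.v *)
(* Finite-dimensional modules over kQ/J^2 are modelled as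
   representations of the finite quiver Q satisfying the relations
   "composite of any two consecutive arrows is zero". *)
From mathcomp Require Import all_boot all_algebra.
Set Implicit Arguments. Unset Strict Implicit. Unset Printing Implicit Defensive.
Import GRing.Theory.
Local Open Scope ring_scope.

Section Reps.
Variables (k : fieldType) (m : nat) (A : finType) (s t : A -> 'I_m).

(* A finite-dimensional representation: vector spaces k^(dimv i) (row vectors)
   and linear maps x |-> x *m mapv a for each arrow a. *)
Record rep := Rep {
  dimv : 'I_m -> nat;
  mapv : forall a : A, 'M[k]_(dimv (s a), dimv (t a)) }.

Definition rad2_zero (X : rep) : Prop :=
  forall (a b : A) (e : t a = s b),
    mapv X a *m castmx (esym (congr1 (dimv X) e), erefl) (mapv X b) = 0.

Record module := Module { mrep :> rep; mrel : rad2_zero mrep }.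

Definition hommx (X Y : module) := forall i : 'I_m, 'M[k]_(dimv X i, dimv Y i).

Definition is_hom (X Y : module) (f : hommx X Y) : Prop :=
  forall a : A, mapv X a *m f (t a) = f (s a) *m mapv Y a.

Definition ses (X Y Z : module) (f : hommx X Y) (g : hommx Y Z) : Prop :=
  [/\ is_hom f, is_hom g &
      forall i, [/\ row_free (f i), row_full (g i) & (f i == kermx (g i))%MS]].

(* Ext^1(Z, X) = 0 : every extension of Z by X splits. *)
Definition ext1_vanish (Z X : module) : Prop :=
  forall (Y : module) (f : hommx X Y) (g : hommx Y Z), ses f g ->
    exists h : hommx Z Y, is_hom h /\ forall i, h i *m g i = 1%:M.

Definition projective (P : module) : Prop :=
  forall (X Y : module) (g : hommx X Y), is_hom g -> (forall i, row_full (g i)) ->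
    forall p : hommx P Y, is_hom p ->
      exists q : hommx P X, is_hom q /\ forall i, q i *m g i = p i.

(* ext_vanishS j X Y  <->  Ext^(j+1)(X, Y) = 0, defined by dimension shifting
   along a projective presentation 0 -> K -> P -> X -> 0. *)
Fixpoint ext_vanishS (j : nat) (X Y : module) : Prop :=
  match j with
  | 0 => ext1_vanish X Y
  | j'.+1 => exists (K P : module) (f : hommx K P) (g : hommx P X),
      [/\ projective P, ses f g & ext_vanishS j' K Y]
  end.

Definition contravariantly_finite (C : module -> Prop) : Prop :=
  forall X : module, exists (C0 : module) (f : hommx C0 X),
    [/\ C C0, is_hom f &
      forall (C1 : module) (g : hommx C1 X), C C1 -> is_hom g ->
        exists h : hommx C1 C0, is_hom h /\ forall i, h i *m f i = g i].

Definition covariantly_finite (C : module -> Prop) : Prop :=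
  forall X : module, exists (C0 : module) (f : hommx X C0),
    [/\ C C0, is_hom f &
      forall (C1 : module) (g : hommx X C1), C C1 -> is_hom g ->
        exists h : hommx C0 C1, is_hom h /\ forall i, f i *m h i = g i].

Definition functorially_finite (C : module -> Prop) : Prop :=
  contravariantly_finite C /\ covariantly_finite C.

(* n-cluster tilting: Ext^i for 0 < i < n, i.e. i = j+1 with j+1 < n. *)
Definition n_cluster_tilting (n : nat) (C : module -> Prop) : Prop :=
  [/\ functorially_finite C,
      (forall X : module, C X <->
         (forall Y : module, C Y -> forall j, (j.+1 < n)%N -> ext_vanishS j X Y)) &
      (forall X : module, C X <->
         (forall Y : module, C Y -> forall j, (j.+1 < n)%N -> ext_vanishS j Y X))].

End Reps.

Definition quiver_adj (m : nat) (A : finType) (s t : A -> 'I_m) : rel 'I_m :=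
  fun i j => [exists a, ((s a == i) && (t a == j)) || ((s a == j) && (t a == i))].

Definition quiver_connected (m : nat) (A : finType) (s t : A -> 'I_m) : Prop :=
  forall i j : 'I_m, connect (quiver_adj s t) i j.

Definition outdeg (m : nat) (A : finType) (s : A -> 'I_m) (v : 'I_m) : nat :=
  #|[set a | s a == v]|.
Definition indeg (m : nat) (A : finType) (t : A -> 'I_m) (u : 'I_m) : nat :=
  #|[set a | t a == u]|.

(* Main.v *)
Require Import Defs.
From mathcomp Require Import all_boot all_algebra.
Set Implicit Arguments. Unset Strict Implicit. Unset Printing Implicit Defensive.
Import GRing.Theory.
Local Open Scope ring_scope.

Section Gen.
Variables (k : fieldType) (m : nat) (A : finType) (s t : A -> 'I_m).
Local Notation module := (module k s t).
Local Notation rep := (rep k s t).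
Local Notation dimv := Defs.dimv.

Lemma castmx_irr m1 n1 m2 n2 (e1 e2 : (m1 = m2) * (n1 = n2)) (M : 'M[k]_(m1, n1)) :
  castmx e1 M = castmx e2 M.
Proof.
case: e1 e2 => [a1 b1] [a2 b2].
by rewrite (eq_irrelevance a1 a2) (eq_irrelevance b1 b2).
Qed.

Definition mvf (d : 'I_m -> nat) (F : forall a : A, 'M[k]_(d (s a), d (t a)))
  (a : A) (i j : 'I_m) : 'M[k]_(d i, d j) :=
  match s a =P i, t a =P j with
  | ReflectT e1, ReflectT e2 => castmx (congr1 d e1, congr1 d e2) (F a)
  | _, _ => 0 end.

Definition mv (X : rep) := mvf (@mapv _ _ _ s t X).

Lemma mvE (X : rep) a : mv X a (s a) (t a) = mapv X a.
Proof.
rewrite /mv /mvf; case: eqP => [e1|//]; case: eqP => [e2|//].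
by rewrite castmx_id.
Qed.

Lemma hom_mv (X Y : module) (f : hommx X Y) : is_hom f ->
  forall a i j, mv X a i j *m f j = f i *m mv Y a i j.
Proof.
move=> hf a i j; rewrite /mv /mvf.
case: eqP => [e1|_]; last by rewrite mul0mx mulmx0.
case: eqP => [e2|_]; last by rewrite mul0mx mulmx0.
subst i j; rewrite !castmx_id; exact: hf.
Qed.

Lemma mv_hom (X Y : module) (f : hommx X Y) :
  (forall a i j, mv X a i j *m f j = f i *m mv Y a i j) -> is_hom f.
Proof. by move=> H a; have := H a (s a) (t a); rewrite !mvE. Qed.

Lemma rad2_mv (X : module) a b i j l : mv X a i j *m mv X b j l = 0.
Proof.
rewrite /mv /mvf.
case: eqP => [e1|_]; last by rewrite mul0mx.
case: eqP => [e2|_]; last by rewrite mul0mx.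
case: eqP => [e3|_]; last by rewrite mulmx0.
case: eqP => [e4|_]; last by rewrite mulmx0.
subst i j l; rewrite castmx_id.
have := mrel X (esym e3).
move=> H; rewrite -[RHS]H; congr (_ *m _); exact: castmx_irr.
Qed.

Definition brep (d : 'I_m -> nat) (F : A -> forall i j, 'M[k]_(d i, d j)) : rep :=
  @Rep _ _ _ s t d (fun a => F a (s a) (t a)).

Lemma brep_mv d F : (forall a i j, ~~((s a == i) && (t a == j)) -> F a i j = 0) ->
  forall a i j, mv (@brep d F) a i j = F a i j.
Proof.
move=> H a i j; rewrite /mv /mvf /=.
case: eqP => [e1|ne1]; [case: eqP => [e2|ne2]|].
- by subst; rewrite castmx_id.
- by rewrite H //; apply/negP => /andP [_ /eqP].
- by rewrite H //; apply/negP => /andP [/eqP].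
Qed.

Lemma cast_gen (d : 'I_m -> nat) p i j (e : i = j) (G : forall x, 'M[k]_(d x, p)) :
  castmx (esym (congr1 d e), erefl) (G j) = G i.
Proof. by case: j / e; rewrite castmx_id. Qed.

Lemma brep_rad2 d F : (forall a b i j l, F a i j *m F b j l = 0) -> rad2_zero (@brep d F).
Proof.
move=> H a b e /=.
rewrite (cast_gen e (fun x => F b x (t b))); exact: H.
Qed.

Definition zmod : module :=
  @Module _ _ _ s t (@brep (fun _ => 0%N) (fun _ _ _ => 0))
    (brep_rad2 (fun _ _ _ _ _ => mul0mx _ _)).


Lemma mx0r p (M N : 'M[k]_(0,p)) : M = N.
Proof. by rewrite (flatmx0 M) (flatmx0 N). Qed.

Lemma zmod_proj : projective zmod.
Proof.
move=> X Y g hg fg p hp; exists (fun i => 0); split.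
- by move=> a; exact: mx0r.
- by move=> i; exact: mx0r.
Qed.

Lemma ses0 (P : module) :
  ses (fun i => 0 : 'M[k]_(dimv zmod i, dimv P i)) (fun i => 1%:M : 'M[k]_(dimv P i, dimv P i)).
Proof.
split.
- by move=> a; exact: mx0r.
- by move=> a; rewrite mul1mx mulmx1.
- move=> i; split.
  + by rewrite /row_free mxrank0.
  + by rewrite /row_full mxrank1.
  + rewrite sub0mx /=; have /eqP -> : kermx (1%:M : 'M[k]_(dimv P i)) == 0 by rewrite -mxrank_eq0 mxrank_ker mxrank1 subnn.
    exact: sub0mx.
Qed.

Lemma zmod_ext j (Y : module) : ext_vanishS j zmod Y.
Proof.
elim: j => [|j IH].
- move=> E f g _; exists (fun i => 0); split.
  + by move=> a; exact: mx0r.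
  + by move=> i; exact: mx0r.
- exists zmod, zmod, (fun i => 0), (fun i => 1%:M); split => //.
  + exact: zmod_proj.
  + exact: ses0.
Qed.

Lemma proj_ext (P : module) : projective P -> forall j (Y : module), ext_vanishS j P Y.
Proof.
move=> pP [|j] Y.
- move=> E f g [hf hg H].
  have [q [hq Hq]] := pP E P g hg (fun i => let: And3 _ x _ := H i in x) (fun i => 1%:M)
    (fun a => etrans (mulmx1 _) (esym (mul1mx _))).
  by exists q.
- exists zmod, P, (fun i => 0), (fun i => 1%:M); split => //.
  + exact: ses0.
  + exact: zmod_ext.
Qed.

Lemma ext_transfer (I : module) : (forall Z, ext1_vanish Z I) ->
  forall j (X Y : module), ext_vanishS j X Y -> ext_vanishS j X I.
Proof.
move=> HI; elim=> [|j IH] X Y /=; first by move=> _; exact: HI.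
case=> K [P [f [g [pP sfg H]]]]; exists K, P, f, g; split => //; exact: IH H.
Qed.

Lemma retr_split (X E Z : module) (f : hommx X E) (g : hommx E Z) (r : hommx E X) :
  ses f g -> is_hom r -> (forall i, f i *m r i = 1%:M) ->
  exists h : hommx Z E, is_hom h /\ forall i, h i *m g i = 1%:M.
Proof.
move=> [hf hg H] hr fr.
have fg0 i : f i *m g i = 0.
  by apply/sub_kermxP; case: (H i) => _ _ /andP [].
pose Pg := fun i => pinvmx (g i).
have pg i : Pg i *m g i = 1%:M by apply: mulVpmx; case: (H i).
clearbody Pg.
exists (fun i => Pg i *m (1%:M - r i *m f i)); split; last first.
  by move=> i; rewrite -mulmxA mulmxBl mul1mx -[r i *m f i *m g i]mulmxA fg0 mulmx0 subr0 pg.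
apply: mv_hom => a i j.
have Hf := hom_mv hf a i j; have Hg := hom_mv hg a i j; have Hr := hom_mv hr a i j.
set D := Pg i *m mv E a i j - mv Z a i j *m Pg j.
have DG : D *m g j = 0.
  by rewrite mulmxBl -mulmxA Hg mulmxA pg mul1mx -mulmxA pg mulmx1 subrr.
have Dsub : (D <= f j)%MS.
  case: (H j) => _ _ /andP [_ K]; apply: submx_trans K; exact/sub_kermxP.
have DE : D *m (1%:M - r j *m f j) = 0.
  rewrite -(mulmxKpV Dsub) -!mulmxA mulmxBr mulmx1 [f j *m (r j *m f j)]mulmxA fr mul1mx subrr.
  by rewrite !mulmx0.
have Ee : (1%:M - r i *m f i) *m mv E a i j = mv E a i j *m (1%:M - r j *m f j).
  rewrite mulmxBl mulmxBr mul1mx mulmx1; congr (_ - _).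
  by rewrite -mulmxA -Hf mulmxA -Hr mulmxA.
rewrite -mulmxA Ee !mulmxA; apply/eqP; rewrite eq_sym -subr_eq0 -mulmxBl.
by rewrite DE.
Qed.

End Gen.

Section Sums.
Variable (k : fieldType).

Lemma sum_ev_in (T : finType) (p : {pred T}) (x : T) (px : x \in p) (V : lmodType k)
  (G : 'I_#|p| -> V) :
  \sum_(q < #|p|) (enum_val q == x)%:R *: G q = G (enum_rank_in px x).
Proof.
rewrite (bigD1 (enum_rank_in px x)) //= enum_rankK_in // eqxx scale1r big1 ?addr0 //.
move=> q nq; case: eqP => [eq|]; last by rewrite scale0r.
by case/eqP: nq; apply: enum_val_inj; rewrite eq enum_rankK_in.
Qed.

Lemma sum_ev_out (T : finType) (p : {pred T}) (x : T) (px : x \notin p) (V : lmodType k)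
  (G : 'I_#|p| -> V) :
  \sum_(q < #|p|) (enum_val q == x)%:R *: G q = 0.
Proof.
apply: big1 => q _; case: eqP => [eq|]; last by rewrite scale0r.
by have := enum_valP q; rewrite eq (negbTE px).
Qed.

Lemma ssum_ev_in (T : finType) (p : {pred T}) (x : T) (px : x \in p)
  (G : 'I_#|p| -> k) :
  \sum_(q < #|p|) (enum_val q == x)%:R * G q = G (enum_rank_in px x).
Proof. exact: (@sum_ev_in T p x px k^o G). Qed.

Lemma ssum_ev_out (T : finType) (p : {pred T}) (x : T) (px : x \notin p)
  (G : 'I_#|p| -> k) :
  \sum_(q < #|p|) (enum_val q == x)%:R * G q = 0.
Proof. exact: (@sum_ev_out T p x px k^o G). Qed.

End Sums.

Section Mods.
Variables (k : fieldType) (m : nat) (A : finType) (s t : A -> 'I_m).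
Local Notation module := (module k s t).
Local Notation rep := (rep k s t).
Local Notation dimv := Defs.dimv.

Definition Tr (d : 'I_m -> nat) (i j : 'I_m) : 'M[k]_(d i, d j) :=
  match i =P j with ReflectT e => castmx (erefl, congr1 d e) 1%:M | ReflectF _ => 0 end.

Lemma Tr_id d i : Tr d i i = 1%:M.
Proof. by rewrite /Tr; case: eqP => // e; rewrite castmx_id. Qed.

Lemma mv0 (X : rep) a i j : ~~ ((s a == i) && (t a == j)) -> mv X a i j = 0.
Proof.
move=> H; rewrite /mv /mvf; case: eqP => [e1|//]; case: eqP => [e2|//].
by case/negP: H; rewrite e1 e2 !eqxx.
Qed.

Variable v : 'I_m.
Definition pP (w : 'I_m) : {pred option A} :=
  fun x => if x is Some b then (s b == v) && (t b == w) else w == v.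
Definition dP w := #|pP w|.
Definition evP w (r : 'I_(dP w)) : option A := enum_val r.

Lemma evPP w (r : 'I_(dP w)) : pP w (evP r).
Proof. exact: (enum_valP r). Qed.

Definition FP (d : A) (i j : 'I_m) : 'M[k]_(dP i, dP j) :=
  \matrix_(r, q) ((evP r == None) && (evP q == Some d))%:R.

Lemma FPE d i j r q : FP d i j r q = ((evP r == None) && (evP q == Some d))%:R.
Proof. by rewrite mxE. Qed.

Lemma FP0 d i j : ~~ ((s d == i) && (t d == j)) -> FP d i j = 0.
Proof.
move=> H; apply/matrixP => r q; rewrite !mxE.
case: eqP => [er|] //=; case: eqP => [eq|] //=.
have := evPP r; have := evPP q; rewrite er eq /= => /andP [/eqP sd /eqP td] /eqP iv.
by case/negP: H; rewrite sd td iv !eqxx.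
Qed.

Lemma FP_rad2 a b i j l : FP a i j *m FP b j l = 0.
Proof.
apply/matrixP => r q; rewrite !mxE; apply: big1 => x _; rewrite !mxE.
by case: (evP x) => [c|] /=; rewrite ?andbF ?mulr0 ?mul0r.
Qed.

Definition Pv : module := @Module _ _ _ s t (@brep _ _ _ s t dP FP) (brep_rad2 FP_rad2).

Lemma mvPv d i j : mv Pv d i j = FP d i j.
Proof. exact: (brep_mv FP0). Qed.

Definition rowq (X : rep) (x0 : 'rV[k]_(dimv X v)) w (x : option A) : 'rV_(dimv X w) :=
  if x is Some b then x0 *m mv X b v w else x0 *m Tr (dimv X) v w.

Lemma Pv_proj : projective Pv.
Proof.
move=> X Y g hg gf p hp.
have Nin : None \in pP v by rewrite unfold_in /= eqxx.
pose rN := enum_rank_in Nin None.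
pose y0 := row rN (p v).
pose x0 := y0 *m pinvmx (g v).
have x0g : x0 *m g v = y0 by rewrite mulmxKpV // submx_full.
exists (fun w => \matrix_r rowq x0 w (evP r)); split.
- apply: mv_hom => d i j; rewrite mvPv; apply/row_matrixP => r.
  rewrite !row_mul rowK mulmx_sum_row.
  under eq_bigr => c _ do rewrite rowK.
  under eq_bigr => c _ do rewrite mxE FPE.
  have := evPP r; case He: (evP r) => [b|] /=.
  + move=> _; rewrite big1; last by move=> c _; rewrite /= ?mulr0n scale0r.
    by rewrite -mulmxA rad2_mv mulmx0.
  + move/eqP=> iv; subst i.
    rewrite Tr_id mulmx1.
    have [sd|sd] := boolP (Some d \in pP j).
    * by rewrite (sum_ev_in sd) /evP enum_rankK_in.
    * have nd : ~~ ((s d == v) && (t d == j)) by move: sd; rewrite unfold_in.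
      by rewrite (sum_ev_out sd) mv0 ?mulmx0.
- move=> w; apply/row_matrixP => r; rewrite row_mul rowK.
  have := evPP r; case He: (evP r) => [b|] /=.
  + case/andP => /eqP sb /eqP tb.
    have pb : Some b \in pP w by rewrite unfold_in /= sb tb !eqxx.
    rewrite -mulmxA (hom_mv hg) mulmxA x0g /y0 -row_mul -(hom_mv hp) mvPv.
    rewrite row_mul mulmx_sum_row.
    under eq_bigr => c _ do rewrite mxE FPE /evP enum_rankK_in // eqxx /=.
    rewrite (sum_ev_in pb); congr row.
    by apply: enum_val_inj; rewrite enum_rankK_in // -He.
  + move/eqP=> wv; subst w.
    rewrite Tr_id mulmx1 x0g /y0; congr row.
    by apply: enum_val_inj; rewrite /rN enum_rankK_in // -He.
Qed.

End Mods.

Section Inj.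
Variables (k : fieldType) (m : nat) (A : finType) (s t : A -> 'I_m).
Local Notation module := (module k s t).
Local Notation rep := (rep k s t).
Local Notation dimv := Defs.dimv.
Variable u : 'I_m.

Definition pI (w : 'I_m) : {pred option A} :=
  fun x => if x is Some c then (t c == u) && (s c == w) else w == u.
Definition dI w := #|pI w|.
Definition evI w (r : 'I_(dI w)) : option A := enum_val r.

Lemma evIP w (r : 'I_(dI w)) : pI w (evI r).
Proof. exact: (enum_valP r). Qed.

Definition FI (d : A) (i j : 'I_m) : 'M[k]_(dI i, dI j) :=
  \matrix_(r, q) ((evI r == Some d) && (evI q == None))%:R.

Lemma FIE d i j r q : FI d i j r q = ((evI r == Some d) && (evI q == None))%:R.
Proof. by rewrite mxE. Qed.

Lemma FI0 d i j : ~~ ((s d == i) && (t d == j)) -> FI d i j = 0.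
Proof.
move=> H; apply/matrixP => r q; rewrite !mxE.
case: eqP => [er|] //=; case: eqP => [eq|] //=.
have := evIP r; have := evIP q; rewrite er eq /= => /eqP ju /andP [/eqP td /eqP sd].
by case/negP: H; rewrite sd td ju !eqxx.
Qed.

Lemma FI_rad2 a b i j l : FI a i j *m FI b j l = 0.
Proof.
apply/matrixP => r q; rewrite !mxE; apply: big1 => x _; rewrite !mxE.
by case: (evI x) => [c|] /=; rewrite ?andbF ?mulr0 ?mul0r.
Qed.

Definition Iu : module := @Module _ _ _ s t (@brep _ _ _ s t dI FI) (brep_rad2 FI_rad2).

Lemma mvIu d i j : mv Iu d i j = FI d i j.
Proof. exact: (brep_mv FI0). Qed.

Lemma Iu_inj (Z : module) : ext1_vanish Z Iu.
Proof.
move=> E f g sfg; have [hf hg H] := sfg.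
have Nin : None \in pI u by rewrite unfold_in /= eqxx.
pose rU := enum_rank_in Nin None.
have [B fB] : exists B, f u *m B = 1%:M by apply/row_freeP; case: (H u).
pose phi := col rU B.
have fphi : f u *m phi = col rU 1%:M.
  by rewrite -fB; apply/matrixP => x y; rewrite !mxE; apply: eq_bigr => z _; rewrite !mxE.
pose colr w (x : option A) : 'cV_(dimv E w) :=
  if x is Some c then mv E c w u *m phi else @Tr k _ (dimv E) w u *m phi.
pose r := fun w => \matrix_(e, c) colr w (evI c) e 0 : 'M_(dimv E w, dI w).
have rE w e c : r w e c = colr w (evI c) e 0 by rewrite mxE.
have colE p w (M : 'M[k]_(p, dimv E w)) x c :
    (M *m r w) x c = (M *m colr w (evI c)) x 0.
  by rewrite !mxE; apply: eq_bigr => e _; rewrite rE.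
apply: (@retr_split _ _ _ s t _ _ _ f g r sfg).
- apply: mv_hom => d i j; rewrite mvIu; apply/matrixP => e c.
  rewrite colE.
  have := evIP c; case Hc: (evI c) => [cc|] /=.
  + case/andP => /eqP tc /eqP sc.
    rewrite mulmxA rad2_mv mul0mx mxE.
    by rewrite mxE big1 // => z _; rewrite FIE Hc /= andbF mulr0.
  + move/eqP=> ju; subst j; rewrite Tr_id mul1mx [RHS]mxE.
    under eq_bigr => z _ do rewrite FIE Hc eqxx andbT mulrC.
    have [sd|sd] := boolP (Some d \in pI i).
    * by rewrite (ssum_ev_in sd) rE /evI enum_rankK_in.
    * have nd : ~~ ((s d == i) && (t d == u)).
        by move: sd; rewrite unfold_in /= andbC.
      by rewrite (ssum_ev_out sd) mv0 // mul0mx mxE.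
- move=> w; apply/matrixP => x c; rewrite colE [RHS]mxE.
  have := evIP c; case Hc: (evI c) => [cc|] /=.
  + case/andP => /eqP tc /eqP sc.
    rewrite mulmxA -(hom_mv hf) -mulmxA fphi mvIu mxE.
    under eq_bigr => z _ do rewrite FIE !mxE.
    case Hx: (evI x == Some cc) => /=.
    * rewrite (ssum_ev_in Nin) eqxx.
      suff -> : x == c by [].
      by rewrite /evI in Hx Hc; apply/eqP/enum_val_inj; rewrite (eqP Hx) Hc.
    * rewrite big1 => [|z _]; last by rewrite mul0r.
      case: eqP => // xc; move: Hx; rewrite xc.
      by rewrite /evI in Hc; rewrite /evI Hc eqxx.
  + move/eqP => wu; subst w; rewrite Tr_id mul1mx fphi !mxE.
    suff -> : c = rU by [].
    by apply: enum_val_inj; rewrite /rU enum_rankK_in // -Hc.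
Qed.

End Inj.

Lemma rank_eq (T : finType) (p : {pred T}) (x y z : T) (py : y \in p) (pz : z \in p) :
  x \in p -> enum_rank_in py x = enum_rank_in pz x.
Proof. by move=> px; apply: enum_val_inj; rewrite !enum_rankK_in. Qed.

Section Ext.
Variables (k : fieldType) (m : nat) (A : finType) (s t : A -> 'I_m).
Local Notation module := (module k s t).
Local Notation dimv := Defs.dimv.
Variables (a0 c0 d0 b0 : A).
Local Notation v := (s a0).
Local Notation u := (t a0).
Local Notation PV := (Pv k s t v).
Local Notation IU := (Iu k s t u).
Local Notation dP := (dP s t v).
Local Notation dI := (dI s t u).
Local Notation FP := (FP k s t v).
Local Notation FI := (FI k s t u).

Definition th (c d b : A) : k := ((c == c0) && (d == d0) && (b == b0))%:R.

Definition Th (d : A) (i j : 'I_m) : 'M[k]_(dI i, dP j) :=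
  \matrix_(r, q) (if evI r is Some c then if evP q is Some b then
        th c d b * ((s d == i) && (t d == j))%:R else 0 else 0).

Lemma ThE d i j r q : Th d i j r q = (if evI r is Some c then if evP q is Some b then
        th c d b * ((s d == i) && (t d == j))%:R else 0 else 0).
Proof. by rewrite mxE. Qed.

Definition FE (d : A) (i j : 'I_m) : 'M[k]_(dP i + dI i, dP j + dI j) :=
  block_mx (FP d i j) 0 (Th d i j) (FI d i j).

Lemma Th0 d i j : ~~ ((s d == i) && (t d == j)) -> Th d i j = 0.
Proof.
move=> H; apply/matrixP => r q; rewrite ThE mxE.
case: (evI r) => // c; case: (evP q) => // b.
by rewrite (negbTE H) mulr0.
Qed.

Lemma FE0 d i j : ~~ ((s d == i) && (t d == j)) -> FE d i j = 0.
Proof. by move=> H; rewrite /FE FP0 // FI0 // Th0 // block_mx0. Qed.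

Lemma ThFP a b i j l : Th a i j *m FP b j l = 0.
Proof.
apply/matrixP => r q; rewrite !mxE; apply: big1 => x _; rewrite ThE FPE.
by case: (evI r) => [c|]; case: (evP x) => [e|] /=; rewrite ?mulr0 ?mul0r.
Qed.

Lemma FITh a b i j l : FI a i j *m Th b j l = 0.
Proof.
apply/matrixP => r q; rewrite !mxE; apply: big1 => x _; rewrite ThE FIE.
by case: (evI x) => [c|] /=; rewrite ?andbF ?mulr0 ?mul0r.
Qed.

Lemma FE_rad2 a b i j l : FE a i j *m FE b j l = 0.
Proof.
rewrite /FE mulmx_block FP_rad2 FI_rad2 ThFP FITh !mulmx0 !mul0mx !addr0.
by rewrite block_mx0.
Qed.

Definition Emod : module :=
  @Module _ _ _ s t (@brep _ _ _ s t (fun w => dP w + dI w)%N FE) (brep_rad2 FE_rad2).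

Lemma mvE' d i j : mv Emod d i j = FE d i j.
Proof. exact: (brep_mv FE0). Qed.

Definition fE : hommx PV Emod := fun w => row_mx 1%:M 0.
Definition gE : hommx Emod IU := fun w => col_mx 0 1%:M.

Lemma sesE : ses fE gE.
Proof.
split.
- apply: mv_hom => d i j; rewrite mvE' mvPv /fE /FE.
  by rewrite mul_mx_row mul_row_block mulmx1 mulmx0 !mul1mx !mul0mx !addr0.
- apply: mv_hom => d i j; rewrite mvE' mvIu /gE /FE.
  by rewrite mul_block_col mul_col_mx !mulmx0 !mulmx1 !mul0mx !mul1mx !add0r.
- move=> w; rewrite /fE /gE.
  have fr : row_free (row_mx (1%:M : 'M[k]_(dP w)) (0 : 'M_(dP w, dI w))).
    by apply/row_freeP; exists (col_mx 1%:M 0); rewrite mul_row_col mulmx1 mulmx0 addr0.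
  have gr : row_full (col_mx (0 : 'M[k]_(dP w, dI w)) (1%:M : 'M_(dI w))).
    by apply/row_fullP; exists (row_mx 0 1%:M); rewrite mul_row_col mulmx1 mulmx0 add0r.
  split => //.
  have sub : (row_mx (1%:M : 'M[k]_(dP w)) (0 : 'M_(dP w, dI w)) <=
              kermx (col_mx (0 : 'M[k]_(dP w, dI w)) (1%:M : 'M_(dI w))))%MS.
    by apply/sub_kermxP; rewrite mul_row_col mulmx0 mulmx1 addr0.
  rewrite -(mxrank_leqif_eq sub).2 mxrank_ker (eqP gr).
  by rewrite (eqP fr) addnK.
Qed.

Section Split.
Variable h : hommx IU Emod.
Hypotheses (hh : is_hom h) (hg : forall i, h i *m gE i = 1%:M).

Definition al w : 'M[k]_(dI w, dP w) := lsubmx (h w).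

Lemma keyeq d i j : FI d i j *m al j = al i *m FP d i j + Th d i j.
Proof.
have hr w : rsubmx (h w) = 1%:M.
  by rewrite -(hg w) /gE -{2}(hsubmxK (h w)) mul_row_col mulmx0 mulmx1 add0r.
have := hom_mv hh d i j; rewrite mvIu mvE' /FE.
rewrite -(hsubmxK (h j)) -(hsubmxK (h i)) !hr mul_mx_row mul_row_block.
by case/eq_row_mx; rewrite mul1mx.
Qed.

Lemma NinI : None \in pI s t u u. Proof. by rewrite unfold_in /= eqxx. Qed.
Lemma Sa0P : Some a0 \in pP s t v u. Proof. by rewrite unfold_in /= !eqxx. Qed.
Lemma Sa0I : Some a0 \in pI s t u v. Proof. by rewrite unfold_in /= !eqxx. Qed.
Lemma NinP : None \in pP s t v v. Proof. by rewrite unfold_in /= eqxx. Qed.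

Definition be (b : A) : k := al u (enum_rank_in NinI None) (enum_rank_in Sa0P (Some b)).
Definition la (c : A) : k := al v (enum_rank_in Sa0I (Some c)) (enum_rank_in NinP None).

Lemma keyI c b : t c = u -> s b = v -> t b = u ->
  be b = (if s c == v then la c * (b == c)%:R else 0) + th c c b.
Proof.
move=> tc sb tb.
have pb : Some b \in pP s t v u by rewrite unfold_in /= sb tb !eqxx.
have [scv|scnv] := eqVneq (s c) v.
- have pc : Some c \in pI s t u v by rewrite unfold_in /= tc scv !eqxx.
  have := congr1 (fun M : 'M[k]_(dI v, dP u) => M (enum_rank_in pc (Some c)) (enum_rank_in pb (Some b))) (keyeq c v u).
  rewrite /= mxE [in RHS]mxE [in RHS]mxE ThE.
  under eq_bigr => z _ do rewrite FIE /evI enum_rankK_in // eqxx andTb.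
  rewrite (ssum_ev_in NinI) /evI /evP !enum_rankK_in // scv tc !eqxx mulr1.
  under [in RHS]eq_bigr => z _ do rewrite FPE /evP enum_rankK_in // mulrC.
  rewrite /be (rank_eq Sa0P pb) // => ->.
  have -> : (Some b == Some c) = (b == c) by [].
  case: (b == c).
  + under eq_bigr => z _ do rewrite andbT.
    by rewrite (ssum_ev_in NinP) /la mulr1 (rank_eq Sa0I pc).
  + by rewrite big1 ?mulr0 // => z _; rewrite andbF mul0r.
- have pc : Some c \in pI s t u (s c) by rewrite unfold_in /= tc !eqxx.
  have := congr1 (fun M : 'M[k]_(dI (s c), dP u) => M (enum_rank_in pc (Some c)) (enum_rank_in pb (Some b))) (keyeq c (s c) u).
  rewrite /= mxE [in RHS]mxE [in RHS]mxE ThE.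
  under eq_bigr => z _ do rewrite FIE /evI enum_rankK_in // eqxx andTb.
  rewrite (ssum_ev_in NinI) /evI /evP !enum_rankK_in // tc !eqxx mulr1.
  rewrite /be (rank_eq Sa0P pb) // => ->.
  rewrite big1 ?add0r // => z _; rewrite FPE.
  have := evPP z; case: (evP z) => [e|] /=; first by rewrite mulr0.
  by rewrite (negbTE scnv).
Qed.

Lemma keyII c d : t c = u -> s c = v -> s d = v -> d != c -> 0 = la c + th c d d.
Proof.
move=> tc sc sd dc.
have pc : Some c \in pI s t u v by rewrite unfold_in /= tc sc !eqxx.
have pd : Some d \in pP s t v (t d) by rewrite unfold_in /= sd !eqxx.
have := congr1 (fun M : 'M[k]_(dI v, dP (t d)) => M (enum_rank_in pc (Some c)) (enum_rank_in pd (Some d))) (keyeq d v (t d)).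
rewrite /= mxE [in RHS]mxE [in RHS]mxE ThE.
rewrite big1; last first.
  move=> z _; rewrite FIE /evI enum_rankK_in //.
  have -> : (Some c == Some d) = (c == d) by [].
  by rewrite eq_sym (negbTE dc) /= mul0r.
under [in RHS]eq_bigr => z _ do rewrite FPE /evP enum_rankK_in // (eqxx (Some d)) andbT mulrC.
rewrite (ssum_ev_in NinP) /evI /evP !enum_rankK_in //= sd !eqxx mulr1.
by rewrite /la (rank_eq Sa0I pc).
Qed.

End Split.

Lemma keys : ext1_vanish IU PV -> exists (be la : A -> k),
  (forall c b, t c = u -> s b = v -> t b = u ->
     be b = (if s c == v then la c * (b == c)%:R else 0) + th c c b) /\
  (forall c d, t c = u -> s c = v -> s d = v -> d != c -> 0 = la c + th c d d).
Proof.
move=> Ext; have [h [hh hg]] := Ext Emod fE gE sesE.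
by exists (be h), (la h); split => *; [apply: keyI | apply: keyII].
Qed.

End Ext.

From mathcomp Require Import zify.

Lemma no10 (k : fieldType) (x : k) : x = 1 -> x = 0 -> False.
Proof. by move=> -> /eqP; rewrite oner_eq0. Qed.

Unset Implicit Arguments.
Local Close Scope ring_scope.

Theorem corollary2p5 (k : fieldType) (m : nat) (A : finType) (s t : A -> 'I_m)
    (n : nat) (C : module k s t -> Prop) :
  (2 <= n)%N ->
  quiver_connected s t ->
  n_cluster_tilting n C ->
  forall a : A, (outdeg s (s a) + indeg t (t a) <= 3)%N.
Proof.
move=> n2 _ [_ HC1 HC2] a0.
rewrite leqNgt; apply/negP => H4.
pose PV := Pv k s t (s a0); pose IU := Iu k s t (t a0).
have PVC : C PV.
  by apply/HC1 => Y CY j jn; apply: proj_ext; apply: Pv_proj.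
have IUC : C IU.
  apply/HC2 => Y CY j jn.
  apply: (ext_transfer (fun Z => @Iu_inj k m A s t (t a0) Z)).
  exact: (HC1 Y).1 CY PV PVC j jn.
have Ext : ext1_vanish IU PV := (HC1 IU).1 IUC PV PVC 0 n2.
pose X := [set b | s b == s a0] :\ a0.
pose Y := [set c | t c == t a0] :\ a0.
have hX : outdeg s (s a0) = (#|X|).+1.
  by rewrite /outdeg (cardsD1 a0) inE eqxx.
have hY : indeg t (t a0) = (#|Y|).+1.
  by rewrite /indeg (cardsD1 a0) inE eqxx.
rewrite hX hY in H4.
have inX d : (d \in X) = (d != a0) && (s d == s a0) by rewrite !inE.
have inY d : (d \in Y) = (d != a0) && (t d == t a0) by rewrite !inE.
case: (pickP [pred c | (c \in Y) && (s c == s a0)]) => [c2 /andP [] | noD].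
  rewrite inY => /andP [c2a /eqP tc2] /eqP sc2.
  have [be [la [KI KII]]] := keys a0 c2 c2 Ext.
  have e1 := KII a0 c2 erefl erefl sc2 c2a.
  have e2 := KI a0 a0 erefl erefl erefl.
  have e3 := KI c2 a0 tc2 erefl erefl.
  move: e1 e2 e3; rewrite /th sc2 !eqxx (negbTE c2a) eq_sym (negbTE c2a) /=.
  rewrite !mulr1 !mulr0 !addr0 => e1 e2 e3.
  by rewrite -e2 e3 add0r in e1; move/eqP: e1; rewrite eq_sym ?oner_eq0 ?pnatr_eq0.
have noD' c : c \in Y -> s c != s a0.
  by move=> cY; apply/negP => sc; have := noD c; rewrite /= cY sc.
have [Y2|Y1] := ltnP 1 #|Y|.
  have [c1 [c2 [c1Y c2Y c12]]] := card_gt1P Y2.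
  have /andP [_ /eqP tc1] : (c1 != a0) && (t c1 == t a0) by rewrite -inY.
  have /andP [_ /eqP tc2] : (c2 != a0) && (t c2 == t a0) by rewrite -inY.
  have [be [la [KI KII]]] := keys c1 c1 a0 Ext.
  have e1 := KI c1 a0 tc1 erefl erefl.
  have e2 := KI c2 a0 tc2 erefl erefl.
  move: e1 e2; rewrite /th (negbTE (noD' _ c1Y)) (negbTE (noD' _ c2Y)) !eqxx.
  rewrite eq_sym (negbTE c12) /= !add0r => e1 e2.
  exact: no10 e1 e2.
have [Y0|Y0] := posnP #|Y|.
  have X2 : (1 < #|X|)%N by lia.
  have [d1 [d2 [d1X d2X d12]]] := card_gt1P X2.
  have /andP [d1a /eqP sd1] : (d1 != a0) && (s d1 == s a0) by rewrite -inX.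
  have /andP [d2a /eqP sd2] : (d2 != a0) && (s d2 == s a0) by rewrite -inX.
  have [be [la [KI KII]]] := keys a0 d1 d1 Ext.
  have e1 := KII a0 d1 erefl erefl sd1 d1a.
  have e2 := KII a0 d2 erefl erefl sd2 d2a.
  move: e1 e2; rewrite /th !eqxx eq_sym (negbTE d12) /= addr0 => e1 e2.
  by rewrite -e2 add0r in e1; exact: (no10 e1 erefl).
have X1 : (0 < #|X|)%N by lia.
have [d dX] := card_gt0P X1.
have [c1 c1Y] := card_gt0P Y0.
have /andP [da /eqP sd] : (d != a0) && (s d == s a0) by rewrite -inX.
have /andP [c1a /eqP tc1] : (c1 != a0) && (t c1 == t a0) by rewrite -inY.
have [be [la [KI KII]]] := keys c1 c1 a0 Ext.
have e1 := KI c1 a0 tc1 erefl erefl.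
have e2 := KI a0 a0 erefl erefl erefl.
have e3 := KII a0 d erefl erefl sd da.
move: e1 e2 e3; rewrite /th (negbTE (noD' _ c1Y)) !eqxx eq_sym (negbTE c1a) /=.
rewrite !add0r !addr0 mulr1 => e1 e2 e3.
exact: no10 e1 (etrans e2 (esym e3)).
Qed.
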